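(* With $Y$, $Y^+$, $X$, $\Delta^+$ as in the context, one has $\gamma_{Y^+/X}(1)=-p\,N_{\Delta^+}\in\mathbb{Z}[\Delta^+]$, where $N_{\Delta^+}=\sum_{\sigma\in\Delta^+}\sigma$.
   Context: Let $p$ be an odd prime, $\Delta=\mathrm{Gal}(\mathbb{Q}(\zeta_p)/\mathbb{Q})$, $\sigma_i:\zeta_p\mapsto\zeta_p^i$, $j=\sigma_{-1}$, $\Delta^+=\Delta/\langle j\rangle$. Digraphs have incidence $e\mapsto(o(e),t(e))$; derived digraph $X(G,\alpha)$ of $\alpha:E_X\to G$ has vertices $V_X\times G$, edges $E_X\times G$, $o(e,\sigma)=(o(e),\sigma)$, $t(e,\sigma)=(t(e),\sigma\alpha(e))$, and $G$ acts by left multiplication on the second coordinate. $X$ is the bouquet (one vertex) with $\frac{p-1}{2}p+1$ loops $e_0$, $e_{i,k}$ ($1\le k\le i\le p-1$), $\alpha(e_0)=\sigma_1$, $\alpha(e_{i,k})=\sigma_i^{-1}$, $Y=X(\Delta,\alpha)$, and $Y^+=Y_{\langle j\rangle}$ the quotient digraph by $\langle j\rangle$, on which $\Delta^+$ acts freely on vertices with quotient $X$. For a finite abelian group $K$ acting on a finite digraph $W$ freely on vertices, $\gamma_{W/W_K}(u)=\det_{\mathbb{Z}[K][u]}(\mathcal{I}-\mathcal{A}_Wu)$ on the free $\mathbb{Z}[K][u]$-module $\mathbb{Z}V_W[u]$, where $\mathcal{A}_W(w)=\sum_{o(\varepsilon)=w}t(\varepsilon)$. *)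

(* Defs.v *)
From HB Require Import structures.
From mathcomp Require Import all_boot all_order all_algebra all_fingroup.
Set Implicit Arguments. Unset Strict Implicit. Unset Printing Implicit Defensive.
Import GRing.Theory FinRing.Theory.
Set Implicit Arguments. Unset Strict Implicit. Unset Printing Implicit Defensive.
Import GRing.Theory FinRing.Theory.
Local Open Scope ring_scope.

Definition grpring (K : finGroupType) (cK : forall x y : K, (x * y = y * x)%g)
  := {ffun K -> int}.

Section GroupRing.
Variables (K : finGroupType) (cK : forall x y : K, (x * y = y * x)%g).
Local Notation grpring := (grpring cK).
HB.instance Definition _ := GRing.Zmodule.on grpring.

Definition gr_one : grpring := [ffun g => ((g == 1%g) : nat)%:Z].
Definition gr_mul (a b : grpring) : grpring :=
  [ffun g => \sum_(h : K) a h * b (h^-1 * g)%g].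

Lemma gr_mulA : associative gr_mul.
Proof.
move=> a b c; apply/ffunP=> g; rewrite !ffunE.
under eq_bigr => h _ do rewrite ffunE big_distrr /=.
under [RHS]eq_bigr => h _ do rewrite ffunE big_distrl /=.
rewrite [RHS]exchange_big /=; apply: eq_bigr => i _.
rewrite [RHS](reindex_inj (mulgI i)) /=; apply: eq_bigr => m _.
by rewrite mulrA mulKg invMg mulgA.
Qed.

Lemma gr_mulC : commutative gr_mul.
Proof.
move=> a b; apply/ffunP=> g; rewrite !ffunE.
have inj : injective (fun h : K => (h^-1 * g)%g).
  by move=> x y /mulIg /invg_inj.
rewrite (reindex_inj inj) /=; apply: eq_bigr => h _.
by rewrite mulrC invMg invgK -mulgA (cK h g) mulKg.
Qed.

Lemma gr_mul1 : left_id gr_one gr_mul.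
Proof.
move=> a; apply/ffunP=> g; rewrite ffunE (bigD1 1%g) //= big1 ?addr0.
  by rewrite ffunE eqxx mul1r invg1 mul1g.
by move=> h /negbTE nh; rewrite ffunE nh mul0r.
Qed.

Lemma gr_mulDl : left_distributive gr_mul +%R.
Proof.
move=> a b c; apply/ffunP=> g; rewrite !ffunE -big_split /=.
by apply: eq_bigr => h _; rewrite ffunE mulrDl.
Qed.

Lemma gr_one_neq0 : gr_one != 0.
Proof. by apply/eqP => /ffunP /(_ 1%g); rewrite !ffunE eqxx. Qed.

HB.instance Definition _ := GRing.Zmodule_isComNzRing.Build (grpring)
  gr_mulA gr_mulC gr_mul1 gr_mulDl gr_one_neq0.

Definition grelt (x : K) : grpring := [ffun g => ((g == x) : nat)%:Z].

Definition grnorm : grpring := \sum_(x : K) grelt x.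

End GroupRing.

(* gamma_{W/W_K}(u) for a finite digraph W = (V, E, o, t) with an      *)
(* action act of the finite abelian group K on V, free on vertices.    *)
(* Z V_W is a free Z[K]-module with basis a set of orbit               *)
(* representatives rep_1..rep_n; writing                               *)
(*    A_W(rep_i) = sum_{o(e)=rep_i} t(e) = sum_j M_ij rep_j,           *)
(* with M_ij = sum_{o(e)=rep_i, t(e) in K.rep_j} [g_e], g_e.rep_j=t(e), *)
(* gamma(u) = det_{Z[K][u]} (I - A_W u) = det (1 - u M).               *)
Section Gamma.
Variables (K : finGroupType) (cK : forall x y : K, (x * y = y * x)%g).
Variables (V E : finType) (o t : E -> V) (act : K -> V -> V).

Definition vorbit (v : V) : {set V} := [set act k v | k : K].
Definition orbit_rep (v : V) : V := odflt v [pick w in vorbit v].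
Definition reps : seq V := [seq v <- enum V | orbit_rep v == v].
Definition rep (i : 'I_(size reps)) : V := tnth (in_tuple reps) i.
(* the (unique, by freeness) k in K with act k w = v *)
Definition coef (v w : V) : K := odflt 1%g [pick k | act k w == v].

Definition adj_mx : 'M[grpring cK]_(size reps) :=
  \matrix_(i, j) \sum_(e : E | (o e == rep i) && (t e \in vorbit (rep j)))
                    grelt cK (coef (t e) (rep j)).

Definition gamma : {poly grpring cK} :=
  \det (1%:M - 'X *: map_mx polyC adj_mx).
End Gamma.

Section Derived.
Variables (VX EX : finType) (oX tX : EX -> VX) (G : finGroupType).
Variable alpha : EX -> G.
Definition der_o (x : EX * G) : VX * G := (oX x.1, x.2).
Definition der_t (x : EX * G) : VX * G := (tX x.1, x.2 * alpha x.1)%g.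
Definition der_actV (s : G) (v : VX * G) : VX * G := (v.1, s * v.2)%g.
Definition der_actE (s : G) (x : EX * G) : EX * G := (x.1, s * x.2)%g.
End Derived.

Section Quotient.
Variables (G : finGroupType) (H : {group G}).
Variables (V E : finType) (o t : E -> V).
Variables (actV : G -> V -> V) (actE : G -> E -> E).

Definition horb (T : finType) (act : G -> T -> T) (x : T) : {set T} :=
  [set act h x | h in H].

Definition qV := {S : {set V} | [exists v, S == horb actV v]}.
Definition qE := {S : {set E} | [exists e, S == horb actE e]}.

Lemma qV_of_proof (v : V) : [exists w, horb actV v == horb actV w].
Proof. by apply/existsP; exists v. Qed.
Definition qV_of (v : V) : qV := exist _ (horb actV v) (qV_of_proof v).
Definition qV_rep (S : qV) : V := xchoose (elimT existsP (valP S)).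
Definition qE_rep (C : qE) : E := xchoose (elimT existsP (valP C)).

Definition q_o (C : qE) : qV := qV_of (o (qE_rep C)).
Definition q_t (C : qE) : qV := qV_of (t (qE_rep C)).

Definition q_actV (c : coset_of H) (S : qV) : qV :=
  qV_of (actV (repr c) (qV_rep S)).
End Quotient.

(* The specific data.  Delta = Gal(Q(zeta_p)/Q) is identified with     *)
(* (Z/pZ)^x = {unit 'F_p} via sigma_i <-> i.                           *)
Definition Delta (p : nat) := {unit 'F_p}.
Definition sigma (p i : nat) : Delta p := insubd (1%g : Delta p) (i%:R : 'F_p).
(* j = sigma_{-1} = sigma_{p-1} *)
Definition jconj (p : nat) : Delta p := sigma p p.-1.
Definition Jgrp (p : nat) : {group Delta p} := <[jconj p]>%G.
Definition DeltaPlus (p : nat) := coset_of (Jgrp p).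

Lemma DeltaPlus_comm (p : nat) : forall x y : DeltaPlus p, (x * y = y * x)%g.
Proof.
move=> x y; case: (cosetP x) => a Na ->; case: (cosetP y) => b Nb ->.
rewrite -!morphM //; congr coset; apply: val_inj; rewrite !val_unitM.
exact: mulrC.
Qed.

(* The bouquet X: one vertex, loops e_0 (= None) and e_{i,k}, 1 <= k <= i <= p-1 *)
Definition XV := unit.
Definition XE (p : nat) := option {ik : 'I_p * 'I_p | (0 < ik.2)%N && (ik.2 <= ik.1)%N}.
Definition XoT (p : nat) (e : XE p) : XV := tt.
Definition alphaX (p : nat) (e : XE p) : Delta p :=
  match e with
  | None => sigma p 1
  | Some ik => ((sigma p (val ik).1)^-1)%g
  end.

Definition YV (p : nat) := (XV * Delta p)%type.
Definition YE (p : nat) := (XE p * Delta p)%type.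
Definition Y_o (p : nat) : YE p -> YV p := @der_o _ _ (@XoT p) (Delta p).
Definition Y_t (p : nat) : YE p -> YV p := @der_t _ _ (@XoT p) (Delta p) (@alphaX p).
Definition Y_actV (p : nat) : Delta p -> YV p -> YV p := @der_actV XV (Delta p).
Definition Y_actE (p : nat) : Delta p -> YE p -> YE p := @der_actE (XE p) (Delta p).

Definition YplusV (p : nat) := qV (Jgrp p) (@Y_actV p).
Definition YplusE (p : nat) := qE (Jgrp p) (@Y_actE p).
Definition Yplus_o (p : nat) : YplusE p -> YplusV p :=
  @q_o _ (Jgrp p) _ _ (@Y_o p) (@Y_actV p) (@Y_actE p).
Definition Yplus_t (p : nat) : YplusE p -> YplusV p :=
  @q_t _ (Jgrp p) _ _ (@Y_t p) (@Y_actV p) (@Y_actE p).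
Definition Yplus_act (p : nat) : DeltaPlus p -> YplusV p -> YplusV p :=
  @q_actV _ (Jgrp p) _ (@Y_actV p).

Definition gamma_YplusX (p : nat) : {poly grpring (@DeltaPlus_comm p)} :=
  gamma (@DeltaPlus_comm p) (@Yplus_o p) (@Yplus_t p) (@Yplus_act p).

(* Main.v *)
Require Import Defs.
From HB Require Import structures.
From mathcomp Require Import all_boot all_order all_algebra all_fingroup all_solvable.
From mathcomp Require Import zify ring.
Set Implicit Arguments. Unset Strict Implicit. Unset Printing Implicit Defensive.
Import GRing.Theory.
Local Open Scope ring_scope.

Lemma det11 (R : comNzRingType) n (A : 'M[R]_n) (i : 'I_n) : n = 1%N -> \det A = A i i.
Proof.
move=> h; move: A i; rewrite h => A i.
by rewrite det_mx11 (ord1 i).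
Qed.

Section GammaTrans.
Variables (K : finGroupType) (cK : forall x y : K, (x * y = y * x)%g).
Variables (V E : finType) (o t : E -> V) (act : K -> V -> V).
Hypothesis trans : forall v w, exists k, act k v = w.

Lemma vorbitT v : vorbit act v = setT.
Proof. by apply/setP=> w; rewrite inE; case: (trans v w) => k <-; apply/imsetP; exists k. Qed.

Lemma orbit_rep_const v w : orbit_rep act v = orbit_rep act w.
Proof.
rewrite /orbit_rep !vorbitT.
by case: pickP => [//|/(_ v)]; rewrite inE.
Qed.

Variable x0 : V.
Let u := orbit_rep act x0.

Lemma reps_eq : reps act = [:: u].
Proof.
rewrite /reps.
have -> : [seq v <- enum V | orbit_rep act v == v] = [seq v <- enum V | v == u].
  by apply: eq_filter => v; rewrite (orbit_rep_const v x0) eq_sym.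
rewrite filter_pred1_uniq ?enum_uniq // mem_enum //.
Qed.

Lemma gamma_trans :
  (gamma cK o t act).[1] =
  1 - \sum_(e | o e == u) grelt cK (coef act (t e) u).
Proof.
have sz : size (reps act) = 1%N by rewrite reps_eq.
have i0 : 'I_(size (reps act)) by rewrite sz; exact: ord0.
rewrite /gamma (det11 _ i0 sz) !mxE.
have ru : rep i0 = u.
  rewrite /rep (tnth_nth u) /=; move: (nat_of_ord i0) (ltn_ord i0) => k.
  by rewrite reps_eq; case: k.
rewrite ru eqxx /= mulr1n hornerD hornerN hornerC.
rewrite mulrC hornerMX hornerC mulr1 vorbitT.
by under eq_bigl => e do rewrite inE andbT.
Qed.
End GammaTrans.
Section Spec.
Variable p : nat.
Hypothesis p_prime : prime p.
Hypothesis p_odd : odd p.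

Local Notation J := (Jgrp p).
Local Notation cs := (coset (Jgrp p)).

Lemma cD (x y : Delta p) : (x * y = y * x)%g.
Proof. by apply: val_inj; rewrite !FinRing.val_unitM mulrC. Qed.

Lemma normJ (x : Delta p) : x \in 'N(J)%g.
Proof.
have ab : abelian [set: Delta p] by apply/centsP => a _ b _; exact: cD.
exact: (subsetP (sub_abelian_norm ab (subsetT J))).
Qed.

Lemma csM (x y : Delta p) : cs (x * y)%g = (cs x * cs y)%g.
Proof. by rewrite morphM ?normJ. Qed.

Lemma csV (x : Delta p) : cs (x^-1)%g = ((cs x)^-1)%g.
Proof. by rewrite morphV ?normJ. Qed.

Lemma cs_eq (x y : Delta p) : (cs x == cs y) = (x \in (J :* y)%g).
Proof.
apply/eqP/idP.
  move=> h; have : cs (x * y^-1)%g = 1%g by rewrite csM csV h mulgV.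
  move/(coset_idr (normJ _)) => hJ; apply/rcosetP; exists (x * y^-1)%g => //.
  by rewrite mulgKV.
case/rcosetP => h hJ ->; by rewrite csM coset_id // mul1g.
Qed.

Lemma val_sigma i : (0 < i < p)%N -> val (sigma p i) = i%:R.
Proof.
move=> hi; rewrite /sigma val_insubd unitfE.
have -> : (i%:R : 'F_p) != 0.
  apply/negP => /eqP h.
  have : (p %| i)%N by rewrite (dvdn_pcharf (pchar_Fp p_prime)) h.
  move/dvdn_leq; lia.
by [].
Qed.

Lemma natrp : ((p.-1).+1%:R : 'F_p) = p%:R.
Proof. congr (_%:R); have := prime_gt1 p_prime; lia. Qed.

Lemma jconj_neq1 : jconj p != 1%g.
Proof.
apply/negP => /eqP h; have := congr1 val h; rewrite val_sigma; last first.
  have := prime_gt1 p_prime; lia.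
move=> h2.
have : ((p.-1).+1%:R : 'F_p) = 1 + 1 by rewrite -natr1 h2.
rewrite natrp pchar_Fp_0 // => /esym/eqP; rewrite -(natrD _ 1 1).
rewrite -(dvdn_pcharf (pchar_Fp p_prime)) => /dvdn_leq h3.
have := prime_gt1 p_prime; have : p != 2%N by apply/eqP=> e; move: p_odd; rewrite e.
lia.
Qed.

Lemma jconj_val : val (jconj p) = -1.
Proof.
rewrite /jconj val_sigma; last by have := prime_gt1 p_prime; lia.
apply/eqP; rewrite -subr_eq0 opprK -(natrD _ _ 1) addn1.
by rewrite natrp pchar_Fp_0.
Qed.

Lemma card_J : #|J| = 2%N.
Proof.
rewrite -orderE.
have h1 : (#[jconj p]%g %| 2)%N.
  rewrite order_dvdn; apply/eqP/val_inj; rewrite FinRing.val_unitX jconj_val /=.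
  by rewrite expr2 mulrNN mulr1.
have h2 : #[jconj p]%g != 1%N by rewrite order_eq1 jconj_neq1.
have h3 := order_gt0 (jconj p).
move: h1 h2 h3; case: (#[jconj p])%g => [|[|[|n]]] //.
Qed.


Lemma horb_eq (T : finType) (a a' : T) (d d' : Delta p) :
  horb J (@der_actV T (Delta p)) (a, d) = horb J (@der_actV T (Delta p)) (a', d')
  <-> a = a' /\ cs d = cs d'.
Proof.
split.
  move=> h; have : (a, d) \in horb J (@der_actV T (Delta p)) (a', d').
    by rewrite -h; apply/imsetP; exists 1%g; rewrite ?group1 // /der_actV /= mul1g.
  case/imsetP => k kJ [-> ->]; split=> //; by rewrite coset_kerl.
case=> <- /eqP; rewrite cs_eq => /rcosetP [h hJ ->].
apply/setP => z; apply/imsetP/imsetP.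
  case=> k kJ ->; exists (k * h)%g; first by rewrite groupM.
  by rewrite /der_actV /= mulgA.
case=> k kJ ->; exists (k * h^-1)%g; first by rewrite groupM ?groupV.
by rewrite /der_actV /= mulgA mulgKV.
Qed.

Definition qVof (v : YV p) : YplusV p := qV_of J (@Y_actV p) v.

Lemma qVof_eq (d d' : Delta p) : qVof (tt, d) = qVof (tt, d') <-> cs d = cs d'.
Proof.
split.
  by move/(congr1 val) => /= /horb_eq [].
by move=> h; apply: val_inj => /=; apply/horb_eq.
Qed.

Lemma qV_of_rep (S : YplusV p) : qVof (qV_rep S) = S.
Proof.
apply: val_inj => /=; rewrite /qV_rep.
by apply/esym/eqP; exact: (xchooseP (elimT existsP (valP S))).
Qed.

Definition rV (S : YplusV p) : Delta p := (qV_rep S).2.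

Lemma qV_of_rV (S : YplusV p) : qVof (tt, rV S) = S.
Proof. by rewrite /rV -[RHS]qV_of_rep; case: (qV_rep S) => [[] d]. Qed.

Lemma act_qVof (c : DeltaPlus p) (S : YplusV p) :
  Yplus_act c S = qVof (tt, repr c * rV S)%g.
Proof. by rewrite /Yplus_act /q_actV /rV; case: (qV_rep S) => [[] d]. Qed.

Lemma Yplus_trans (S T : YplusV p) : exists c, Yplus_act c S = T.
Proof.
exists (cs (rV T * (rV S)^-1))%g.
rewrite act_qVof -[RHS]qV_of_rV; apply/qVof_eq.
by rewrite (csM (repr _) (rV S)) coset_reprK -csM mulgKV.
Qed.


Lemma qEof_proof (x : YE p) : [exists e, horb J (@Y_actE p) x == horb J (@Y_actE p) e].
Proof. by apply/existsP; exists x. Qed.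
Definition qEof (x : YE p) : YplusE p :=
  exist (fun S => [exists e, S == horb J (@Y_actE p) e]) (horb J (@Y_actE p) x) (qEof_proof x).

Lemma qEof_eq e e' (d d' : Delta p) : qEof (e, d) = qEof (e', d') <-> e = e' /\ cs d = cs d'.
Proof.
split.
  by move/(congr1 val) => /= /(@horb_eq (XE p)) [].
by move=> h; apply: val_inj => /=; apply/(@horb_eq (XE p)).
Qed.

Lemma qE_of_rep (C : YplusE p) : qEof (qE_rep C) = C.
Proof.
apply: val_inj => /=; rewrite /qE_rep.
by apply/esym/eqP; exact: (xchooseP (elimT existsP (valP C))).
Qed.

Variable S0 : YplusV p.
Let d0 := rV S0.
Definition hE (e : XE p) : YplusE p := qEof (e, d0).

Lemma rep_hE e : (qE_rep (hE e)).1 = e /\ cs (qE_rep (hE e)).2 = cs d0.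
Proof.
have := qE_of_rep (hE e); rewrite /hE; case: (qE_rep _) => e' d' /=.
by move/qEof_eq.
Qed.

Lemma o_hE e : Yplus_o (hE e) = S0.
Proof.
rewrite -[RHS]qV_of_rV; have [_ h2] := rep_hE e.
rewrite /Yplus_o /q_o; move: h2; case: (qE_rep _) => e' d' /= h2.
by apply/qVof_eq.
Qed.

Lemma coef_hE e : coef (@Yplus_act p) (Yplus_t (hE e)) S0 = cs (alphaX e).
Proof.
have [h1 h2] := rep_hE e.
rewrite /coef; case: pickP => [k /eqP|].
  rewrite act_qVof /Yplus_t /q_t; move: h1 h2; case: (qE_rep _) => e' d' /= -> h2.
  move/qVof_eq; rewrite !csM coset_reprK h2 -/d0 => hk.
  by apply: (mulIg (cs d0)); rewrite hk DeltaPlus_comm.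
move/(_ (cs (alphaX e))); rewrite act_qVof /Yplus_t /q_t; move: h1 h2.
case: (qE_rep _) => e' d' /= -> h2.
suff -> : qVof (tt, repr (cs (alphaX e)) * rV S0)%g = qVof (Y_t (e, d')) by rewrite eqxx.
apply/qVof_eq; rewrite !csM coset_reprK h2 -/d0; exact: DeltaPlus_comm.
Qed.

Lemma sum_edges (R : nmodType) (F : YplusE p -> R) :
  \sum_(C | Yplus_o C == S0) F C = \sum_(e : XE p) F (hE e).
Proof.
rewrite (reindex_onto hE (fun C => (qE_rep C).1)).
  apply: eq_bigl => e; rewrite o_hE eqxx /=; have [-> _] := rep_hE e.
  by rewrite eqxx.
move=> C /eqP hC; rewrite -[RHS]qE_of_rep /hE.
move: hC; rewrite -(qE_of_rep C) /Yplus_o /q_o qE_of_rep.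
case: (qE_rep C) => e' d' /= h.
apply/qEof_eq; split=> //; apply/qVof_eq; rewrite qV_of_rV; exact: (esym h).
Qed.

End Spec.
Section Count.
Variable p : nat.
Hypothesis p_prime : prime p.
Hypothesis p_odd : odd p.

Local Notation J := (Jgrp p).
Local Notation cs := (coset (Jgrp p)).
Local Notation RR := (grpring (@DeltaPlus_comm p)).
Local Notation g := (grelt (@DeltaPlus_comm p)).

Definition nD (d : Delta p) : nat := val (val d).

Lemma nD_lt d : (nD d < p)%N.
Proof. by rewrite /nD -[X in (_ < X)%N](Fp_cast p_prime) ltn_ord. Qed.

Lemma nD_gt0 d : (0 < nD d)%N.
Proof.
rewrite lt0n /nD; apply/negP => /eqP h.
have : val d = 0 by apply: val_inj.
by move=> h0; have := valP d; rewrite h0 unitr0.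
Qed.

Lemma nD_natr d : ((nD d)%:R : 'F_p) = val d.
Proof.
apply: ord_inj; have := val_Fp_nat p_prime (nD d); rewrite modn_small ?nD_lt //.
Qed.

Lemma nD_sigma i : (0 < i < p)%N -> nD (sigma p i) = i.
Proof.
move=> hi; rewrite /nD val_sigma //; have := val_Fp_nat p_prime i.
rewrite modn_small //; last by lia.
Qed.

Lemma sigma_nD d : sigma p (nD d) = d.
Proof.
apply: val_inj; rewrite val_sigma ?nD_natr //.
by rewrite nD_gt0 nD_lt.
Qed.

Lemma nD_j d : nD (jconj p * d)%g = (p - nD d)%N.
Proof.
have h : ((nD (jconj p * d)%g + nD d)%:R : 'F_p) = 0.
  by rewrite natrD !nD_natr FinRing.val_unitM jconj_val // mulN1r addNr.
move: h => /eqP; rewrite -(dvdn_pcharf (pchar_Fp p_prime)) => /dvdnP [k hk].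
have := nD_lt d; have := nD_lt (jconj p * d)%g.
have := nD_gt0 d; have := nD_gt0 (jconj p * d)%g.
case: k hk => [|[|k]] hk; rewrite ?mulSn ?mul0n in hk; lia.
Qed.

Lemma gg_j d : g (cs ((jconj p * d)^-1))%g = g (cs (d^-1))%g.
Proof. by rewrite invMg csM // (coset_id (groupVr (cycle_id _))) mulg1. Qed.

Lemma sum_cs (F : DeltaPlus p -> RR) :
  \sum_(d : Delta p) F (cs d) = \sum_(c : DeltaPlus p) F c *+ 2.
Proof.
rewrite (partition_big cs xpredT) //=; apply: eq_bigr => c _.
rewrite (eq_bigr (fun _ => F c)); last by move=> d /eqP ->.
case: (cosetP c) => x _ ->.
rewrite (eq_bigl (mem (J :* x)%g)); last by move=> d; rewrite /= cs_eq.
by rewrite sumr_const card_rcoset (card_J p_prime p_odd).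
Qed.


Lemma card_range (i : 'I_p) : #|[pred k : 'I_p | (0 < k <= i)%N]| = i.
Proof.
rewrite -sum1_card -(big_mkord (fun k => (0 < k <= i)%N) (fun _ => 1%N)) big_mkcond /=.
have hi : (i.+1 <= p)%N by exact: ltn_ord.
rewrite (big_cat_nat (n := i.+1)) //=.
rewrite [X in (_ + X)%N]big1_seq ?addn0; last first.
  move=> k; rewrite mem_index_iota => /andP [h1 h2].
  by case: ifP => //; lia.
rewrite big_nat_recl //= (eq_big_nat _ _ (F2 := fun _ => 1%N)).
  by rewrite sum_nat_const_nat; lia.
by move=> k /andP [_ ->].
Qed.

Lemma sum_inv : \sum_(d : Delta p) g (cs (d^-1))%g = grnorm (@DeltaPlus_comm p) *+ 2.
Proof.
rewrite (reindex_inj invg_inj) /=.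
under eq_bigr => d _ do rewrite invgK.
by rewrite sum_cs sumrMnl.
Qed.

Lemma S_eq :
  \sum_(d : Delta p) g (cs (d^-1))%g *+ nD d = grnorm (@DeltaPlus_comm p) *+ p.
Proof.
set S := (X in X = _).
have hS : S + S = (grnorm (@DeltaPlus_comm p) *+ 2) *+ p.
  rewrite {2}/S (reindex_inj (mulgI (jconj p))) /=.
  rewrite /S -big_split /=.
  rewrite (eq_bigr (fun d => g (cs d^-1)%g *+ p)); last first.
    move=> d _; rewrite gg_j nD_j -mulrnDr subnKC //; exact: ltnW (nD_lt d).
  by rewrite sumrMnl sum_inv.
rewrite -mulr2n mulrnAC in hS.
clearbody S; move: hS; move: (grnorm _) => N hS.
apply/ffunP => c.
rewrite ffunMnE.
have h := congr1 (fun f : {ffun DeltaPlus p -> int} => f c) hS.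
move: h; rewrite !ffunMnE.
move: (S c) (N c) => a b.
move: (b *+ p) => b'; rewrite !mulr2n; lia.
Qed.




Lemma sigma1 : sigma p 1 = 1%g.
Proof. by apply: val_inj; rewrite val_sigma //; have := prime_gt1 p_prime; lia. Qed.

Lemma sum_alpha :
  \sum_(e : XE p) g (cs (alphaX e)) = 1 + grnorm (@DeltaPlus_comm p) *+ p.
Proof.
rewrite (bigD1 None) // [alphaX None]/alphaX sigma1 morph1.
have -> : g 1%g = 1 by [].
congr (_ + _).
rewrite (reindex_omap (fun x => Some x) (fun e => e)); last by case.
rewrite (eq_bigl xpredT); last by move=> x; rewrite eqxx.
pose G (ik : 'I_p * 'I_p) := g (cs ((sigma p ik.1)^-1))%g.
rewrite (eq_bigr (fun i => G (val i))) //.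
have -> : \sum_(i : {ik : 'I_p * 'I_p | (0 < ik.2)%N && (ik.2 <= ik.1)%N}) G (val i)
        = \sum_(ik : 'I_p * 'I_p | (0 < ik.2)%N && (ik.2 <= ik.1)%N) G ik.
  rewrite [RHS](reindex_omap (fun x : {ik : 'I_p * 'I_p | (0 < ik.2)%N && (ik.2 <= ik.1)%N} => val x) insub); last by move=> ik Pik; rewrite insubT.
  by apply: eq_bigl => -[ik Pik] /=; rewrite Pik insubT /= eqxx.
pose G' (i : 'I_p) := g (cs ((sigma p i)^-1))%g.
have -> : \sum_(ik : 'I_p * 'I_p | (0 < ik.2)%N && (ik.2 <= ik.1)%N) G ik
   = \sum_(i : 'I_p) \sum_(k : 'I_p | (0 < k <= i)%N) G' i.
  by rewrite pair_big_dep; apply: eq_big.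
rewrite (eq_bigr (fun i => G' i *+ i)); last first.
  move=> i _; rewrite (eq_bigl (mem [pred k : 'I_p | (0 < k <= i)%N])) //.
  by rewrite sumr_const card_range.
rewrite (bigID (fun i : 'I_p => (0 < i)%N)) /= [X in _ + X]big1 ?addr0; last first.
  by move=> i; rewrite lt0n negbK => /eqP ->; rewrite mulr0n.
rewrite (reindex_onto (fun d : Delta p => Ordinal (nD_lt d)) (fun i : 'I_p => sigma p i)); last first.
  by move=> i hi; apply: val_inj; rewrite /= nD_sigma // hi ltn_ord.
rewrite -S_eq; apply: eq_big => d.
  by rewrite /= nD_gt0 sigma_nD eqxx.
by move=> _; rewrite /G' /= sigma_nD.
Qed.

End Count.

Unset Implicit Arguments.

Theorem proposition5p3 (p : nat) (p_prime : prime p) (p_odd : odd p) :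
  (gamma_YplusX p).[1] = - (p%:R * grnorm (@DeltaPlus_comm p)).
Proof.
rewrite /gamma_YplusX.
rewrite (gamma_trans (DeltaPlus_comm (p:=p)) (@Yplus_o p) (@Yplus_t p) (@Yplus_trans p) (qVof (tt, 1%g : Delta p))).
set u := orbit_rep _ _.
rewrite (sum_edges u (fun C => grelt (DeltaPlus_comm (p:=p)) (coef (Yplus_act (p:=p)) (Yplus_t C) u))).
under eq_bigr => e _ do rewrite coef_hE.
by rewrite sum_alpha // opprD addrA subrr add0r mulr_natl.
Qed.
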